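(* Let $\mathcal{K}$ be a Fraïssé class in a finite relational language $\mathcal{L}$, let $\mathbf{K}=\mathrm{Flim}(\mathcal{K})$ have finite big Ramsey degrees, and let $\mathbf{K}^*$ and $\mathbf{K}'$ be recurrent big Ramsey structures for $\mathbf{K}$ in finite relational languages $\mathcal{L}^*\supseteq\mathcal{L}$ and $\mathcal{L}'\supseteq\mathcal{L}$ respectively. Then each of $\mathbf{K}^*$, $\mathbf{K}'$ is bi-interpretable with a substructure of the other.
   Context: For structures $\mathbf{A},\mathbf{B}$, $\mathrm{Emb}(\mathbf{A},\mathbf{B})$ is the set of embeddings. For $\mathbf{A}\in\mathcal{K}$, the big Ramsey degree $\mathrm{BRD}(\mathbf{A},\mathbf{K})$ is the least $t$ (if it exists) such that for every $r>t$ and every coloring $\chi:\mathrm{Emb}(\mathbf{A},\mathbf{K})\to r$ there is $g\in\mathrm{Emb}(\mathbf{K},\mathbf{K})$ with $|\chi[g\circ\mathrm{Emb}(\mathbf{A},\mathbf{K})]|\le t$. For $\mathcal{L}^*\supseteq\mathcal{L}$ and an $\mathcal{L}^*$-expansion $\mathbf{M}^*$ of $\mathbf{M}$ (same underlying set, $\mathcal{L}$-reduct equal to $\mathbf{M}$), $\mathbf{M}^*(\mathbf{B})$ denotes the set of $\mathcal{L}^*$-expansions of the finite structure $\mathbf{B}$ embeddable in $\mathbf{M}^*$, and for $f\in\mathrm{Emb}(\mathbf{B},\mathbf{M})$, $\mathbf{M}^*\cdot f$ is the unique $\mathbf{B}^*\in\mathbf{M}^*(\mathbf{B})$ with $f\in\mathrm{Emb}(\mathbf{B}^*,\mathbf{M}^*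 )$. A big Ramsey structure for $\mathbf{K}$ is an expansion $\mathbf{K}^*$ such that for every $\mathbf{A}\in\mathcal{K}$, $|\mathbf{K}^*(\mathbf{A})|=\mathrm{BRD}(\mathbf{A},\mathbf{K})$ and for every $g\in\mathrm{Emb}(\mathbf{K},\mathbf{K})$ the coloring $f\mapsto\mathbf{K}^*\cdot f$ takes all $|\mathbf{K}^*(\mathbf{A})|$ values on $g\circ\mathrm{Emb}(\mathbf{A},\mathbf{K})$. It is recurrent if $\mathrm{Emb}(\mathbf{K}^*,\mathbf{K}^*\cdot\eta)\ne\emptyset$ for every $\eta\in\mathrm{Emb}(\mathbf{K},\mathbf{K})$, where $\mathbf{K}^*\cdot\eta$ is the expansion of $\mathbf{K}$ pulled back along $\eta$. *)

(* Defs.v *)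
From mathcomp Require Import all_boot.
Set Implicit Arguments. Unset Strict Implicit. Unset Printing Implicit Defensive.

Record lang := Lang { sym :> finType; ar : sym -> nat }.

Definition structure (L : lang) (T : Type) := forall s : L, (ar s).-tuple T -> bool.

Definition is_emb (L : lang) (T U : Type) (A : structure L T) (B : structure L U)
  (f : T -> U) : Prop :=
  injective f /\ forall (s : L) (x : (ar s).-tuple T), B s (map_tuple f x) = A s x.

Definition Emb (L : lang) (T U : Type) (A : structure L T) (B : structure L U) :=
  {f : T -> U | is_emb A B f}.

(* Expansions: a language L^* ⊇ L is L ⊔ E for a finite language E of new
   symbols; an L^*-expansion of M is given by an E-structure X on the same
   carrier.  Pull-back of the new relations along a map f (this is M^*.f). *)
Definition pull (E : lang) (T U : Type) (X : structure E U) (f : T -> U) : structure E T :=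
  fun s x => X s (map_tuple f x).

Definition exp_set (L E : lang) (T U : Type) (B : structure L T)
  (M : structure L U) (X : structure E U) (Y : structure E T) : Prop :=
  exists f : T -> U, is_emb B M f /\ is_emb Y X f.

Definition card_is (X : Type) (P : X -> Prop) (n : nat) : Prop :=
  exists e : 'I_n -> X, injective e /\ forall x, P x <-> exists i, e i = x.

Definition fclass (L : lang) := forall T : finType, structure L T -> Prop.

Definition hereditary (L : lang) (K : fclass L) : Prop :=
  forall (T1 T2 : finType) (A : structure L T1) (B : structure L T2) (f : T1 -> T2),
    K T2 B -> is_emb A B f -> K T1 A.

Definition jep (L : lang) (K : fclass L) : Prop :=
  forall (T1 T2 : finType) (A : structure L T1) (B : structure L T2),
    K T1 A -> K T2 B ->
    exists (T3 : finType) (C : structure L T3) (f : T1 -> T3) (g : T2 -> T3),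
      [/\ K T3 C, is_emb A C f & is_emb B C g].

Definition ap (L : lang) (K : fclass L) : Prop :=
  forall (T0 T1 T2 : finType) (A : structure L T0) (B : structure L T1)
         (C : structure L T2) (f : T0 -> T1) (g : T0 -> T2),
    K T0 A -> K T1 B -> K T2 C -> is_emb A B f -> is_emb A C g ->
    exists (T3 : finType) (D : structure L T3) (h : T1 -> T3) (k : T2 -> T3),
      [/\ K T3 D, is_emb B D h, is_emb C D k & forall a, h (f a) = k (g a)].

(* Fraisse class (in a finite relational language, countably many
   isomorphism types is automatic; closure under isomorphism follows from
   heredity). *)
Definition fraisse_class (L : lang) (K : fclass L) : Prop :=
  [/\ exists (T : finType) (A : structure L T), K T A, hereditary K, jep K & ap K].

Definition is_flim (L : lang) (Kc : fclass L) (U : countType) (K : structure L U) : Prop :=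
  (forall (T : finType) (A : structure L T), Kc T A <-> exists f, is_emb A K f) /\
  (forall (T : finType) (A : structure L T) (f g : T -> U),
     is_emb A K f -> is_emb A K g ->
     exists s : U -> U, [/\ is_emb K K s, bijective s & forall a, s (f a) = g a]).

Definition brd_bound (L : lang) (T : finType) (U : Type) (A : structure L T)
  (K : structure L U) (t : nat) : Prop :=
  forall r : nat, t < r -> forall chi : Emb A K -> 'I_r,
    exists g : U -> U, is_emb K K g /\
      exists S : {set 'I_r}, #|S| <= t /\
        forall h : Emb A K, (exists f : T -> U, is_emb A K f /\ proj1_sig h =1 g \o f) ->
          chi h \in S.

Definition is_BRD (L : lang) (T : finType) (U : Type) (A : structure L T)
  (K : structure L U) (t : nat) : Prop :=
  brd_bound A K t /\ forall t', brd_bound A K t' -> t <= t'.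

Definition finite_BRDs (L : lang) (Kc : fclass L) (U : Type) (K : structure L U) : Prop :=
  forall (T : finType) (A : structure L T), Kc T A -> exists t, brd_bound A K t.

Definition big_ramsey_structure (L E : lang) (Kc : fclass L) (U : Type)
  (K : structure L U) (X : structure E U) : Prop :=
  forall (T : finType) (A : structure L T), Kc T A ->
    (exists t, is_BRD A K t /\ card_is (exp_set A K X) t) /\
    (forall g : U -> U, is_emb K K g ->
       forall Y : structure E T, exp_set A K X Y ->
         exists f : T -> U, is_emb A K f /\ is_emb Y X (g \o f)).

Definition recurrent (L E : lang) (U : Type) (K : structure L U) (X : structure E U) : Prop :=
  forall eta : U -> U, is_emb K K eta ->
    exists h : U -> U, is_emb K K h /\ is_emb X (pull X eta) h.

Definition bi_interpretable (L E E' : lang) (U : Type) (K : structure L U)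
  (X : structure E U) (X' : structure E' U) : Prop :=
  forall (T : finType) (A : structure L T) (f g : T -> U),
    is_emb A K f -> is_emb A K g -> (pull X f = pull X g <-> pull X' f = pull X' g).

(* Main.v *)
Require Import Defs.
From mathcomp Require Import all_boot.
From Stdlib Require Import ClassicalEpsilon FunctionalExtensionality Classical.

Set Implicit Arguments. Unset Strict Implicit. Unset Printing Implicit Defensive.

Lemma map_tuple_comp (T U V : Type) n (f : U -> V) (g : T -> U) (x : n.-tuple T) :
  map_tuple f (map_tuple g x) = map_tuple (f \o g) x.
Proof. apply: val_inj => /=. by rewrite map_comp. Qed.

Lemma map_tuple_id (T : Type) n (x : n.-tuple T) : map_tuple id x = x.
Proof. apply: val_inj => /=. by rewrite map_id. Qed.

Lemma pull_comp (E : lang) (T U V : Type) (X : structure E V) (f : U -> V) (g : T -> U) :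
  pull (pull X f) g = pull X (f \o g).
Proof.
apply: functional_extensionality_dep => s; apply: functional_extensionality => x.
by rewrite /pull map_tuple_comp.
Qed.

Lemma pull_id (E : lang) (U : Type) (X : structure E U) : pull X id = X.
Proof.
apply: functional_extensionality_dep => s; apply: functional_extensionality => x.
by rewrite /pull map_tuple_id.
Qed.

Lemma emb_comp (L : lang) (T U V : Type) (A : structure L T) (B : structure L U)
  (C : structure L V) f g : is_emb A B f -> is_emb B C g -> is_emb A C (g \o f).
Proof.
move=> [fi fr] [gi gr]; split; first exact: inj_comp.
by move=> s x; rewrite -map_tuple_comp gr fr.
Qed.

Lemma emb_id (L : lang) (T : Type) (A : structure L T) : is_emb A A id.
Proof. by split => // s x; rewrite map_tuple_id. Qed.

Lemma emb_pull (E : lang) (T U : Type) (X : structure E U) (f : T -> U) :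
  injective f -> is_emb (pull X f) X f.
Proof. by move=> fi; split. Qed.

Lemma emb_pull_eq (E : lang) (T U : Type) (Y : structure E T) (X : structure E U) f :
  is_emb Y X f -> Y = pull X f.
Proof.
move=> [_ H]; apply: functional_extensionality_dep => s; apply: functional_extensionality => x.
by rewrite /pull H.
Qed.

Definition Pgood (L E E' : lang) (T U : Type) (A : structure L T) (K : structure L U)
  (X : structure E U) (X' : structure E' U) (phi : U -> U) :=
  forall f g, is_emb A K f -> is_emb A K g ->
    (pull X f = pull X g <-> pull X' (phi \o f) = pull X' (phi \o g)).

Lemma Pgood_comp (L E E' : lang) (T U : Type) (A : structure L T) (K : structure L U)
  (X : structure E U) (X' : structure E' U) phi psi :
  Pgood A K X X' phi -> is_emb K K psi -> pull X psi = X -> Pgood A K X X' (phi \o psi).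
Proof.
move=> H hpsi pres f g hf hg.
have := H (psi \o f) (psi \o g) (emb_comp hf hpsi) (emb_comp hg hpsi).
by rewrite -(pull_comp X psi f) -(pull_comp X psi g) pres.
Qed.

Lemma step (L E E' : lang) (Kc : fclass L) (U : countType) (K : structure L U)
  (X : structure E U) (X' : structure E' U) (T : finType) (A : structure L T) phi :
  is_flim Kc K -> big_ramsey_structure Kc K X -> recurrent K X ->
  big_ramsey_structure Kc K X' -> is_emb K K phi ->
  exists psi, [/\ is_emb K K psi, pull X psi = X & Pgood A K X X' (phi \o psi)].
Proof.
move=> flim BR rec BR' hphi.
case: (classic (exists f, is_emb A K f)) => [[f0 hf0]|nA]; last first.
  exists id; split; [exact: emb_id | exact: pull_id |].
  by move=> f g hf; exfalso; apply: nA; exists f.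
have KA : Kc T A := (proj1 flim T A).2 (ex_intro _ f0 hf0).
case: (BR T A KA) => [[t [[bt tmin] [e [einj ecard]]]] BR2].
case: (BR' T A KA) => [[t' [[bt' tmin'] [e' [einj' ecard']]]] BR2'].
have tt' : t' = t by apply/eqP; rewrite eqn_leq tmin' ?tmin.
subst t'.
have expX : forall f, is_emb A K f -> exp_set A K X (pull X f).
  by move=> f hf; exists f; split => //; apply: emb_pull; case: hf.
have expX' : forall f, is_emb A K f -> exp_set A K X' (pull X' f).
  by move=> f hf; exists f; split => //; apply: emb_pull; case: hf.
have [i0 _] : exists i0 : 'I_t, True.
  by case: ((ecard _).1 (expX f0 hf0)) => i _; exists i.
pose idx Y := epsilon (inhabits i0) (fun i => e i = Y).
pose idx' Y := epsilon (inhabits i0) (fun i => e' i = Y).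
have idxP : forall Y, exp_set A K X Y -> e (idx Y) = Y.
  by move=> Y hY; apply: (epsilon_spec (inhabits i0) (fun i => e i = Y)); apply/ecard.
have idxP' : forall Y, exp_set A K X' Y -> e' (idx' Y) = Y.
  by move=> Y hY; apply: (epsilon_spec (inhabits i0) (fun i => e' i = Y)); apply/ecard'.
pose r := #|{: 'I_t * 'I_t}| + t.+1.
have Hr : #|{: 'I_t * 'I_t}| <= r by rewrite /r leq_addr.
pose enc (p : 'I_t * 'I_t) : 'I_r := widen_ord Hr (enum_rank p).
have enc_inj : injective enc.
  by move=> p q /(congr1 val) /= /val_inj /enum_rank_inj.
pose chi (h : Emb A K) : 'I_r :=
  enc (idx (pull X (proj1_sig h)), idx' (pull X' (phi \o proj1_sig h))).
have tr : t < r by rewrite /r addnS ltnS leq_addl.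
have [g [hg [S [cardS HS]]]] := bt r tr chi.
have [h0 [hh0 hX]] := rec g hg.
pose psi := g \o h0.
have hpsi : is_emb K K psi := emb_comp hh0 hg.
have pres : pull X psi = X by rewrite /psi -pull_comp -(emb_pull_eq hX).
exists psi; split => //.
pose R' := [set p | enc p \in S].
have key : forall f, is_emb A K f ->
    (idx (pull X (psi \o f)), idx' (pull X' (phi \o (psi \o f)))) \in R'.
  move=> f hf; rewrite inE.
  exact: (HS (exist _ (psi \o f) (emb_comp hf hpsi))
             (ex_intro _ (h0 \o f) (conj (emb_comp hf hh0) (fun _ => erefl)))).
have cardR : #|R'| <= t.
  rewrite -(card_imset R' enc_inj); apply: leq_trans cardS.
  apply: subset_leq_card; apply/subsetP => z /imsetP [p]; rewrite inE => hp ->.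
  exact: hp.
have fsurj : [set p.1 | p in R'] = setT.
  apply/eqP; rewrite eqEsubset subsetT /=; apply/subsetP => i _.
  have [f [hf he]] := BR2 psi hpsi (e i) ((ecard _).2 (ex_intro _ i erefl)).
  apply/imsetP; exists (idx (pull X (psi \o f)), idx' (pull X' (phi \o (psi \o f)))).
    exact: key.
  rewrite /= -(emb_pull_eq he); apply: einj; rewrite idxP //.
  exact: ((ecard _).2 (ex_intro _ i erefl)).
have ssurj : [set p.2 | p in R'] = setT.
  apply/eqP; rewrite eqEsubset subsetT /=; apply/subsetP => i _.
  have [f [hf he]] := BR2' (phi \o psi) (emb_comp hpsi hphi) (e' i)
    ((ecard' _).2 (ex_intro _ i erefl)).
  apply/imsetP; exists (idx (pull X (psi \o f)), idx' (pull X' (phi \o (psi \o f)))).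
    exact: key.
  rewrite /= -[phi \o (psi \o f)]/((phi \o psi) \o f) -(emb_pull_eq he).
  apply: einj'; rewrite idxP' //.
  exact: ((ecard' _).2 (ex_intro _ i erefl)).
have finj : {in R' &, injective (fun p : 'I_t * 'I_t => p.1)}.
  apply/imset_injP; rewrite eqn_leq leq_imset_card fsurj cardsT card_ord.
  by rewrite (leq_trans cardR) // -{1}(card_ord t) -cardsT -fsurj leq_imset_card.
have sinj : {in R' &, injective (fun p : 'I_t * 'I_t => p.2)}.
  apply/imset_injP; rewrite eqn_leq leq_imset_card ssurj cardsT card_ord.
  by rewrite (leq_trans cardR) // -{1}(card_ord t) -cardsT -ssurj leq_imset_card.
move=> f1 f2 hf1 hf2.
have E1 : pull X f1 = pull X (psi \o f1) by rewrite -pull_comp pres.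
have E2 : pull X f2 = pull X (psi \o f2) by rewrite -pull_comp pres.
rewrite E1 E2.
have h1 := key f1 hf1; have h2 := key f2 hf2.
have hp1 := emb_comp hf1 hpsi; have hp2 := emb_comp hf2 hpsi.
have hq1 := emb_comp hp1 hphi; have hq2 := emb_comp hp2 hphi.
change (pull X (psi \o f1) = pull X (psi \o f2) <->
        pull X' (phi \o (psi \o f1)) = pull X' (phi \o (psi \o f2))).
split => Heq.
- have := finj _ _ h1 h2; rewrite /= Heq => /(_ erefl) [] Hj.
  by rewrite -(idxP' _ (expX' _ hq1)) Hj idxP' //; apply: expX'.
- have := sinj _ _ h1 h2; rewrite /= Heq => /(_ erefl) [] Hj.
  by rewrite -(idxP _ (expX _ hp1)) Hj idxP //; apply: expX.
Qed.

Lemma multi (L E : lang) (U : Type) (K : structure L U) (X : structure E U)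
  (I : eqType) (F : I -> (U -> U) -> Prop) :
  (forall i phi, is_emb K K phi ->
     exists psi, [/\ is_emb K K psi, pull X psi = X & F i (phi \o psi)]) ->
  (forall i phi psi, F i phi -> is_emb K K psi -> pull X psi = X -> F i (phi \o psi)) ->
  forall l : seq I, exists phi, is_emb K K phi /\ forall i, i \in l -> F i phi.
Proof.
move=> Hs Hp; elim => [|i l [phi [hphi IH]]].
  by exists id; split => //; exact: emb_id.
have [psi [hpsi pres Hi]] := Hs i phi hphi.
exists (phi \o psi); split; first exact: emb_comp hpsi hphi.
move=> j; rewrite in_cons => /orP [/eqP -> //|hj].
exact: Hp (IH j hj) hpsi pres.
Qed.

Notation Cm L m := {ffun {s : L & (ar s).-tuple 'I_m} -> bool}.

Definition decode (L : lang) (m : nat) (c : Cm L m) : structure L 'I_m :=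
  fun s x => c (Tagged (fun s => (ar s).-tuple 'I_m) x).

Definition encode (L : lang) (m : nat) (C : structure L 'I_m) : Cm L m :=
  [ffun p => C (tag p) (tagged p)].

Lemma decodeK (L : lang) (m : nat) (C : structure L 'I_m) : decode (encode C) = C.
Proof.
apply: functional_extensionality_dep => s; apply: functional_extensionality => x.
by rewrite /decode ffunE.
Qed.

Lemma reduce (L : lang) (N : nat) (T : finType) (A : structure L T) n (x : n.-tuple T) :
  n <= N ->
  exists i : {m : 'I_N.+1 & Cm L m}, exists sigma : 'I_(tag i) -> T,
    is_emb (decode (tagged i)) A sigma /\
    exists y : n.-tuple 'I_(tag i), map_tuple sigma y = x.
Proof.
move=> hn.
pose S := [set z in x].
have hm : #|S| < N.+1.
  rewrite ltnS (leq_trans _ hn) //; rewrite /S cardsE.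
  by rewrite (leq_trans (card_size _)) // size_tuple.
pose m := Ordinal hm.
pose sigma : 'I_m -> T := @enum_val T (mem S).
have sinj : injective sigma by exact: enum_val_inj.
exists (Tagged (fun m : 'I_N.+1 => Cm L m) (encode (pull A sigma))).
exists sigma; split.
  by rewrite /= decodeK; apply: emb_pull.
have Hmem : forall i : 'I_n, tnth x i \in S by move=> i; rewrite inE mem_tnth.
exists [tuple enum_rank_in (Hmem i) (tnth x i) | i < n].
apply: eq_from_tnth => i; rewrite tnth_map tnth_mktuple.
by rewrite /sigma (enum_rankK_in (Hmem i)) ?Hmem.
Qed.

Lemma half (L : lang) (Kc : fclass L) (U : countType) (K : structure L U)
  (E E' : lang) (X : structure E U) (X' : structure E' U) :
  is_flim Kc K -> big_ramsey_structure Kc K X -> recurrent K X ->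
  big_ramsey_structure Kc K X' ->
  exists eta : U -> U, is_emb K K eta /\ bi_interpretable K X (pull X' eta).
Proof.
move=> flim BR rec BR'.
pose N := maxn (\max_(s : E) ar s) (\max_(s : E') ar s).
pose I : finType := {m : 'I_N.+1 & Cm L m}.
pose F (i : I) phi := Pgood (decode (tagged i)) K X X' phi.
have [phi [hphi Hall]] := @multi L E U K X I F
  (fun i phi hphi => step (decode (tagged i)) flim BR rec BR' hphi)
  (fun i phi psi H hpsi pres => Pgood_comp H hpsi pres) (enum I).
have HF : forall i, F i phi by move=> i; apply: Hall; rewrite mem_enum.
exists phi; split => // T A f g hf hg.
rewrite (pull_comp X' phi f) (pull_comp X' phi g); split => Heq.
- apply: functional_extensionality_dep => s; apply: functional_extensionality => x.
  have [i [sigma [hs [y hy]]]] := reduce (N:=N) A x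
    (leq_trans (@leq_bigmax (sym E') (fun s => ar s) s) (leq_maxr _ _)).
  have := (HF i (f \o sigma) (g \o sigma) (emb_comp hs hf) (emb_comp hs hg)).1.
  rewrite -(pull_comp X f sigma) -(pull_comp X g sigma) Heq => /(_ erefl) H.
  rewrite /pull -hy !map_tuple_comp; exact: (congr1 (fun Z => Z s y) H).
- apply: functional_extensionality_dep => s; apply: functional_extensionality => x.
  have [i [sigma [hs [y hy]]]] := reduce (N:=N) A x
    (leq_trans (@leq_bigmax (sym E) (fun s => ar s) s) (leq_maxl _ _)).
  have := (HF i (f \o sigma) (g \o sigma) (emb_comp hs hf) (emb_comp hs hg)).2.
  have -> : pull X' (phi \o (f \o sigma)) = pull X' (phi \o (g \o sigma)).
    by rewrite -[phi \o (f \o sigma)]/((phi \o f) \o sigma) -pull_comp Heq pull_comp.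
  move=> /(_ erefl) H.
  rewrite /pull -hy !map_tuple_comp; exact: (congr1 (fun Z => Z s y) H).
Qed.

Theorem corollary2p7 (L : lang) (Kc : fclass L) (U : countType) (K : structure L U)
  (E E' : lang) (X : structure E U) (X' : structure E' U) :
  fraisse_class Kc -> is_flim Kc K -> finite_BRDs Kc K ->
  big_ramsey_structure Kc K X -> recurrent K X ->
  big_ramsey_structure Kc K X' -> recurrent K X' ->
  (exists eta : U -> U, is_emb K K eta /\ bi_interpretable K X (pull X' eta)) /\
  (exists eta : U -> U, is_emb K K eta /\ bi_interpretable K X' (pull X eta)).
Proof.
move=> _ flim _ BR rec BR' rec'; split; [exact: (half flim BR rec BR') | exact: (half flim BR' rec' BR)].
Qed.
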